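(* For Variant 1 of the generalized one-way trading problem under Assumption A with $0<L<U$, the optimal competitive ratio (smallest competitive ratio achievable by an online algorithm) is the solution $\alpha^*>1$ of $\alpha^*=\ln\frac{U-L}{\alpha^*L-L}$.
   Context: Variant 1: a single knapsack of capacity $C$; items $n=1,\dots,N$ arrive one at a time; item $n$ has size $D_n>0$ and value function $g_n:[0,D_n]\to\mathbb R_{\ge0}$, revealed on arrival. Any remaining capacity at the end is filled at the lowest marginal value $L$: the offline problem is $\max\sum_n g_n(y_n)+(C-\sum_n y_n)L$ s.t. $\sum_n y_n\le C$, $0\le y_n\le D_n$, and an online algorithm choosing $y_1,\dots,y_N$ earns $\sum_n g_n(y_n)+(C-\sum_n y_n)L$. Assumption A: each $g_n$ is non-decreasing, differentiable, concave, $g_n(0)=0$, $L\le g_n'\le U$, with $C,L,U$ known. An online algorithm irrevocably chooses $y_n$ on arrival using only items $1,\dots,n$ and $C,L,U$; competitive ratio is $\sup_{\mathcal I}\mathrm{OPT}/\mathrm{ALG}$ over instances satisfying Assumption A. *)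

(* Defs.v *)
From Stdlib Require Import Reals Lra List.
Import ListNotations.
Open Scope R_scope.

(** An item: its size D_n and its value function g_n (only its values on
    [0, D_n] are ever used). *)
Definition item := (R * (R -> R))%type.

Definition instance := list item.

Definition Rsum (l : list R) : R := fold_right Rplus 0 l.

Definition deriv_within (g : R -> R) (a b x l : R) : Prop :=
  forall eps, 0 < eps -> exists delta, 0 < delta /\
    forall y, a <= y <= b -> y <> x -> Rabs (y - x) < delta ->
      Rabs ((g y - g x) / (y - x) - l) < eps.

Definition assumptionA_item (L U : R) (it : item) : Prop :=
  let (D, g) := it in
  0 < D /\
  g 0 = 0 /\
  (forall x y, 0 <= x -> x <= y -> y <= D -> g x <= g y) /\
  (forall x y t, 0 <= x <= D -> 0 <= y <= D -> 0 <= t <= 1 ->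
      t * g x + (1 - t) * g y <= g (t * x + (1 - t) * y)) /\
  (forall x, 0 <= x <= D ->
      exists l, deriv_within g 0 D x l /\ L <= l <= U).

Definition assumptionA (L U : R) (I : instance) : Prop :=
  Forall (assumptionA_item L U) I.

Definition feasible (C : R) (I : instance) (y : list R) : Prop :=
  length y = length I /\
  Forall2 (fun (it : item) yn => 0 <= yn <= fst it) I y /\
  Rsum y <= C.

Definition payoff (C L : R) (I : instance) (y : list R) : R :=
  Rsum (map (fun p : item * R => snd (fst p) (snd p)) (combine I y))
  + (C - Rsum y) * L.

(** A deterministic online algorithm maps the history of revealed items
    (items 1..n, the last one being the current one) to the decision y_n. *)
Definition online_alg := instance -> R.

Definition decisions (A : online_alg) (I : instance) : list R :=
  map (fun n => A (firstn (S n) I)) (seq 0 (length I)).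

Definition valid_alg (C L U : R) (A : online_alg) : Prop :=
  forall I, assumptionA L U I -> feasible C I (decisions A I).

(** A is r-competitive: sup_I OPT(I)/ALG(I) <= r, i.e. for every instance
    and every feasible offline solution y, payoff(y) <= r * ALG(I). *)
Definition competitive (C L U : R) (A : online_alg) (r : R) : Prop :=
  forall I, assumptionA L U I ->
    forall y, feasible C I y ->
      payoff C L I y <= r * payoff C L I (decisions A I).

Definition optimal_ratio (C L U r : R) : Prop :=
  (exists A, valid_alg C L U A /\ competitive C L U A r) /\
  (forall A r', valid_alg C L U A -> competitive C L U A r' -> r <= r').

(* Main.v *)
Require Import Defs.
From Stdlib Require Import Reals Lra Lia List ClassicalEpsilon.
Import ListNotations.
Open Scope R_scope.

Lemma exp_ge1 : forall x, 1 + x <= exp x.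
Proof. intro x. destruct (Req_dec x 0) as [->|H]. rewrite exp_0; lra. left; now apply exp_ineq1. Qed.

Lemma exists_alpha (L U : R) (hL : 0 < L) (hLU : L < U) :
  exists alpha, 1 < alpha /\ alpha = ln ((U - L) / (alpha * L - L)).
Proof.
  set (c := (U - L) / L).
  assert (hc : 0 < c) by (unfold c; apply Rdiv_lt_0_compat; lra).
  assert (Hc : continuity (fun x => x - 1 - c * exp (- x))) by reg.
  destruct (IVT _ 1 (1 + c) Hc) as [z [Hz1 Hz2]].
  - lra.
  - cbv beta. pose proof (exp_pos (Ropp 1)). pose proof (Rmult_lt_0_compat _ _ hc H). lra.
  - cbv beta. pose proof (exp_pos (-(1+c))). assert (exp (-(1+c)) < 1).
    { pose proof (exp_increasing (-(1+c)) 0). rewrite exp_0 in H0. apply H0. lra. } assert (0 < c * (1 - exp (-(1+c)))) by (apply Rmult_lt_0_compat; lra). lra.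
  - assert (Hz : z - 1 = c * exp (- z)) by lra.
    pose proof (exp_pos (-z)).
    exists z. split. nra.
    replace ((U - L) / (z * L - L)) with (exp z). now rewrite ln_exp.
    replace (z * L - L) with ((z - 1) * L) by ring. rewrite Hz. unfold c.
    rewrite exp_Ropp. field. pose proof (exp_pos z); repeat split; lra.
Qed.

Lemma Rsum_app : forall l1 l2, Rsum (l1 ++ l2) = Rsum l1 + Rsum l2.
Proof. induction l1; intros; simpl; [ring| rewrite IHl1; ring]. Qed.

Lemma Rsum_map_plus {A} (f g : A -> R) l :
  Rsum (map (fun j => f j + g j) l) = Rsum (map f l) + Rsum (map g l).
Proof. induction l; simpl; [ring| rewrite IHl; ring]. Qed.

Lemma Rsum_map_scal {A} (c : R) (f : A -> R) l :
  Rsum (map (fun j => c * f j) l) = c * Rsum (map f l).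
Proof. induction l; simpl; [ring| rewrite IHl; ring]. Qed.

Lemma Rsum_map_ext {A} (f g : A -> R) l :
  (forall j, In j l -> f j = g j) -> Rsum (map f l) = Rsum (map g l).
Proof. intro H. f_equal. apply map_ext_in. exact H. Qed.

Lemma Rsum_zero {A} (f : A -> R) l :
  (forall j, In j l -> f j = 0) -> Rsum (map f l) = 0.
Proof. induction l; intros H; simpl. ring. rewrite H, IHl. ring. intros; apply H; simpl; auto. simpl; auto. Qed.

Definition sum_upto (f : nat -> R) (k : nat) := Rsum (map f (seq 0 (S k))).

Lemma sum_upto_0 f : sum_upto f 0 = f 0%nat.
Proof. unfold sum_upto. simpl. ring. Qed.

Lemma sum_upto_S f k : sum_upto f (S k) = sum_upto f k + f (S k).
Proof. unfold sum_upto. rewrite (seq_S (S k)), map_app, Rsum_app. simpl. ring. Qed.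

Lemma sum_upto_last f k : (forall j, (j < k)%nat -> f j = 0) -> sum_upto f k = f k.
Proof.
  intro H. destruct k. now rewrite sum_upto_0.
  rewrite sum_upto_S. unfold sum_upto. rewrite Rsum_zero. ring.
  intros j Hj. apply in_seq in Hj. apply H. lia.
Qed.

Lemma firstn_seq' : forall n s l, firstn n (seq s l) = seq s (Nat.min n l).
Proof. induction n; intros; simpl. reflexivity. destruct l; simpl. reflexivity. now rewrite IHn. Qed.

Lemma combine_map_same {A B C} (f : A -> B) (g : A -> C) l :
  combine (map f l) (map g l) = map (fun j => (f j, g j)) l.
Proof. induction l; simpl; [reflexivity| now rewrite IHl]. Qed.

Lemma Forall2_map_same {A B C} (P : B -> C -> Prop) (f : A -> B) (g : A -> C) l :
  (forall j, In j l -> P (f j) (g j)) -> Forall2 P (map f l) (map g l).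
Proof. induction l; intros H; simpl; constructor. apply H; simpl; auto. apply IHl; intros; apply H; simpl; auto. Qed.

Lemma Forall2_map_same_inv {A B C} (P : B -> C -> Prop) (f : A -> B) (g : A -> C) l :
  Forall2 P (map f l) (map g l) -> forall j, In j l -> P (f j) (g j).
Proof. induction l; intros H j Hj; simpl in *. contradiction. inversion H; subst. destruct Hj as [<-|Hj]; auto. Qed.

Definition lin_item (C p : R) : item := (C, fun y => p * y).

Lemma lin_item_A (C L U p : R) : 0 < C -> 0 <= p -> L <= p <= U -> assumptionA_item L U (lin_item C p).
Proof.
  intros hC hp0 hp. unfold lin_item, assumptionA_item. repeat split.
  - exact hC.
  - ring.
  - intros x y Hx Hxy Hy. nra.
  - intros. right; ring.
  - intros x Hx. exists p. split; [|lra].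
    intros eps Heps. exists 1. split. lra. intros y Hy Hyx _.
    replace ((p * y - p * x) / (y - x) - p) with 0. rewrite Rabs_R0; lra.
    field. lra.
Qed.

Lemma sum_upto_lin (c : R) f g k :
  sum_upto (fun j => (c + f j) * g j) k = c * sum_upto g k + sum_upto (fun j => f j * g j) k.
Proof. induction k. rewrite !sum_upto_0; ring. rewrite !sum_upto_S, IHk; ring. Qed.

Lemma lower_core (C L U : R) (A : online_alg) (r : R) (q : nat -> R) (m : nat) (a rho : R) :
  0 < C -> 0 < L -> valid_alg C L U A -> competitive C L U A r ->
  0 < a -> (r - 1) * L <= a -> 1 <= rho -> q 0%nat = a ->
  (forall j, q (S j) = rho * q j) ->
  (forall j, (j <= m)%nat -> 0 < q j /\ L + q j <= U) ->
  INR m * (1 - / rho) <= r.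
Proof.
  intros hC hL Hval Hcomp ha Hra Hrho Hq0 HqS Hq.
  set (it := fun j => lin_item C (L + q j)).
  set (I := fun k => map it (seq 0 (S k))).
  set (x := fun j => A (I j)).
  assert (Hdec : forall k, decisions A (I k) = map x (seq 0 (S k))).
  { intro k. unfold decisions. replace (length (I k)) with (S k).
    2:{ unfold I. now rewrite length_map, length_seq. }
    apply map_ext_in. intros n Hn. apply in_seq in Hn. unfold x, I.
    rewrite firstn_map, firstn_seq'. f_equal. f_equal. f_equal. lia. }
  assert (HA : forall k, (k <= m)%nat -> assumptionA L U (I k)).
  { intros k Hk. unfold assumptionA, I. apply Forall_forall. intros it0 Hit.
    apply in_map_iff in Hit. destruct Hit as [j [<- Hj]]. apply in_seq in Hj.
    destruct (Hq j ltac:(lia)). unfold it. apply lin_item_A; lra. }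
  assert (Hpay : forall k yv, payoff C L (I k) (map yv (seq 0 (S k))) =
     sum_upto (fun j => (L + q j) * yv j) k + (C - sum_upto yv k) * L).
  { intros k yv. unfold payoff, I. rewrite combine_map_same, map_map. reflexivity. }
  assert (Hfeas := Hval (I m) (HA m (Nat.le_refl _))).
  rewrite Hdec in Hfeas. destruct Hfeas as [_ [HF2 Hsum]].
  assert (Hx0 : forall j, (j <= m)%nat -> 0 <= x j).
  { intros j Hj. assert (Hin : In j (seq 0 (S m))) by (apply in_seq; lia).
    pose proof (Forall2_map_same_inv _ _ _ _ HF2 j Hin) as H. cbv beta in H. lra. }
  change (Rsum (map x (seq 0 (S m)))) with (sum_upto x m) in Hsum.
  set (Sq := fun k => sum_upto (fun j => q j * x j) k).
  assert (Hcon : forall k, (k <= m)%nat -> (L + q k) * C <= r * (C * L + Sq k)).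
  { intros k Hk.
    set (yk := fun j => if Nat.eqb j k then C else 0).
    assert (Hyk : sum_upto yk k = C).
    { rewrite sum_upto_last. unfold yk. now rewrite Nat.eqb_refl.
      intros j Hj. unfold yk. destruct (Nat.eqb_spec j k). lia. reflexivity. }
    assert (Hf : feasible C (I k) (map yk (seq 0 (S k)))).
    { split. unfold I. now rewrite !length_map. split.
      apply Forall2_map_same. intros j _. unfold yk, it, lin_item. simpl.
      destruct (Nat.eqb j k); lra.
      change (Rsum (map yk (seq 0 (S k)))) with (sum_upto yk k). lra. }
    pose proof (Hcomp (I k) (HA k Hk) _ Hf) as H.
    rewrite Hdec, !Hpay, Hyk, (sum_upto_lin L q x k), (sum_upto_lin L q yk k) in H.
    rewrite (sum_upto_last (fun j => q j * yk j)) in H.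
    2:{ intros j Hj. unfold yk. destruct (Nat.eqb_spec j k). lia. ring. }
    unfold yk in H. rewrite Nat.eqb_refl in H.
    unfold Sq. replace (C * L + sum_upto (fun j => q j * x j) k) with
      (L * sum_upto x k + sum_upto (fun j => q j * x j) k + (C - sum_upto x k) * L) by ring.
    change (sum_upto (fun j => if Nat.eqb j k then C else 0) k) with (sum_upto yk k) in H. rewrite Hyk in H. lra. }
  assert (HS0 : forall k, (k <= m)%nat -> 0 <= Sq k).
  { induction k; intros Hk; unfold Sq. rewrite sum_upto_0. destruct (Hq 0%nat ltac:(lia)).
    pose proof (Hx0 0%nat ltac:(lia)). nra.
    rewrite sum_upto_S. fold (Sq k). pose proof (IHk ltac:(lia)).
    destruct (Hq (S k) Hk). pose proof (Hx0 (S k) Hk). nra. }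
  assert (Hrpos : 0 < r).
  { pose proof (Hcon 0%nat ltac:(lia)). pose proof (HS0 0%nat ltac:(lia)).
    destruct (Hq 0%nat ltac:(lia)).
    destruct (Rle_or_lt r 0) as [Hr|Hr]; [|exact Hr].
    assert (0 < C * L + Sq 0%nat) by nra. nra. }
  assert (Hcon' : forall k, (k <= m)%nat -> C * (q k - a) <= r * Sq k).
  { intros k Hk. pose proof (Hcon k Hk). assert ((r - 1) * L * C <= a * C) by nra. nra. }
  assert (Hinv : forall k, (k <= m)%nat ->
     r * Sq k / q k + C * (INR k * (1 - / rho) - 1 + a / q k) <= r * sum_upto x k).
  { induction k; intros Hk.
    - unfold Sq. rewrite !sum_upto_0. simpl. rewrite Hq0. right. field. lra.
    - pose proof (IHk ltac:(lia)) as IH. pose proof (Hcon' k ltac:(lia)) as Hc.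
      destruct (Hq k ltac:(lia)) as [Hqk _].
      unfold Sq in *. rewrite !sum_upto_S. rewrite S_INR, HqS.
      set (Sk := sum_upto (fun j => q j * x j) k) in *.
      set (Xk := sum_upto x k) in *.
      set (T := r * Sk - C * (q k - a)).
      assert (HT : 0 <= T) by (unfold T; lra).
      assert (Hd : 0 <= T * (1 - / rho) / q k).
      { apply Rmult_le_pos. apply Rmult_le_pos. lra.
        assert (/ rho <= 1). { rewrite <- Rinv_1. apply Rinv_le_contravar; lra. } lra.
        left. apply Rinv_0_lt_compat. lra. }
      assert (E : r * (Sk + rho * q k * x (S k)) / (rho * q k) +
          C * ((INR k + 1) * (1 - / rho) - 1 + a / (rho * q k))
          = r * Sk / q k + C * (INR k * (1 - / rho) - 1 + a / q k)
            + r * x (S k) - T * (1 - / rho) / q k).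
      { unfold T. field. lra. }
      rewrite E. lra. }
  pose proof (Hinv m (Nat.le_refl _)) as Hm.
  pose proof (Hcon' m (Nat.le_refl _)) as Hcm.
  destruct (Hq m (Nat.le_refl _)) as [Hqm _].
  assert (C * (1 - a / q m) <= r * Sq m / q m).
  { apply (Rmult_le_reg_r (q m)). lra.
    replace (C * (1 - a / q m) * q m) with (C * (q m - a)) by (field; lra).
    replace (r * Sq m / q m * q m) with (r * Sq m) by (field; lra). lra. }
  assert (r * sum_upto x m <= r * C) by (apply Rmult_le_compat_l; lra).
  assert (C * (INR m * (1 - / rho)) <= C * r) by lra.
  apply Rmult_le_reg_l in H1; lra.
Qed.

Lemma exp_le_mono x y : x <= y -> exp x <= exp y.
Proof. intros [H|H]. left; now apply exp_increasing. subst; lra. Qed.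

Lemma lower_bound (C L U alpha : R) (A : online_alg) (r : R) :
  0 < C -> 0 < L -> L < U -> 1 < alpha ->
  exp alpha = (U - L) / ((alpha - 1) * L) ->
  valid_alg C L U A -> competitive C L U A r -> alpha <= r.
Proof.
  intros hC hL hLU ha Hexp Hval Hcomp.
  destruct (Rle_or_lt alpha r) as [H|Hlt]; [exact H|exfalso].
  set (a := (alpha - 1) * L).
  assert (Ha : 0 < a) by (unfold a; nra).
  destruct (INR_unbounded (Rmax 0 (r * alpha / (alpha - r)))) as [n Hn].
  set (m := S n).
  assert (Hm : 1 <= INR m) by (unfold m; rewrite S_INR; pose proof (pos_INR n); lra).
  assert (Hm2 : r * alpha / (alpha - r) < INR m).
  { unfold m; rewrite S_INR. pose proof (Rmax_r 0 (r * alpha / (alpha - r))). lra. }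
  set (q := fun j : nat => a * exp (INR j * alpha / INR m)).
  set (rho := exp (alpha / INR m)).
  assert (Hrho1 : 1 + alpha / INR m <= rho) by apply exp_ineq1_le.
  assert (Hal : 0 < alpha / INR m) by (apply Rdiv_lt_0_compat; lra).
  pose proof (lower_core C L U A r q m a rho hC hL Hval Hcomp Ha) as Hc.
  assert (Hr : INR m * (1 - / rho) <= r).
  { apply Hc.
    - unfold a; nra.
    - lra.
    - unfold q. change (INR 0) with 0. replace (0 * alpha / INR m) with 0 by (field; lra). rewrite exp_0; ring.
    - intro j. unfold q, rho. rewrite S_INR.
      replace ((INR j + 1) * alpha / INR m) with (alpha / INR m + INR j * alpha / INR m) by (field; lra).
      rewrite exp_plus. ring.
    - intros j Hj. unfold q. split. apply Rmult_lt_0_compat. lra. apply exp_pos.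
      assert (a * exp (INR j * alpha / INR m) <= a * exp alpha).
      { apply Rmult_le_compat_l. lra. apply exp_le_mono.
        apply le_INR in Hj. apply (Rmult_le_reg_r (INR m)). lra.
        replace (INR j * alpha / INR m * INR m) with (INR j * alpha) by (field; lra). nra. }
      rewrite Hexp in H. unfold a in H.
      replace ((alpha - 1) * L * ((U - L) / ((alpha - 1) * L))) with (U - L) in H by (field; nra).
      unfold a; lra. }
  assert (Hinv : / rho <= / (1 + alpha / INR m)).
  { apply Rinv_le_contravar; lra. }
  assert (E : 1 - / (1 + alpha / INR m) = alpha / (INR m + alpha)) by (field; lra).
  assert (INR m * (alpha / (INR m + alpha)) <= r).
  { assert (INR m * (1 - / (1 + alpha / INR m)) <= INR m * (1 - / rho)).
    { apply Rmult_le_compat_l; lra. } rewrite E in H. lra. }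
  assert (INR m * alpha <= r * (INR m + alpha)).
  { replace (INR m * alpha) with (INR m * (alpha / (INR m + alpha)) * (INR m + alpha)) by (field; lra).
    apply Rmult_le_compat_r; lra. }
  assert (r * alpha < INR m * (alpha - r)).
  { replace (r * alpha) with (r * alpha / (alpha - r) * (alpha - r)) by (field; lra).
    apply Rmult_lt_compat_r; lra. }
  lra.
Qed.

Definition psi_ (K k w : R) := K * exp (k * w).
Definition Psi_ (K k w : R) := K / k * (exp (k * w) - 1).

Lemma exp_lb x : 1 + x <= exp x. Proof. apply exp_ineq1_le. Qed.

Lemma psi_mono K k v w : 0 < K -> 0 < k -> v <= w -> psi_ K k v <= psi_ K k w.
Proof.
  intros HK Hk Hvw. unfold psi_. apply Rmult_le_compat_l. lra.
  destruct (Req_dec v w). subst; lra. left; apply exp_increasing. nra.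
Qed.

Lemma psi_pos K k v : 0 < K -> 0 < psi_ K k v.
Proof. intros. unfold psi_. apply Rmult_lt_0_compat. lra. apply exp_pos. Qed.

Lemma Psi_up K k v s : 0 < K -> 0 < k -> 0 <= s ->
  Psi_ K k (v + s) - Psi_ K k v <= psi_ K k (v + s) * s.
Proof.
  intros HK Hk Hs. unfold Psi_, psi_.
  pose proof (exp_lb (- (k * s))) as E.
  replace (exp (k * v)) with (exp (k * (v + s)) * exp (- (k * s))).
  2:{ rewrite <- exp_plus. f_equal. ring. }
  set (e := exp (k * (v + s))). assert (He : 0 < e) by apply exp_pos.
  set (f := exp (- (k * s))) in *.
  replace (K / k * (e - 1) - K / k * (e * f - 1)) with (K / k * e * (1 - f)) by ring.
  replace (K * e * s) with (K / k * e * (k * s)) by (field; lra).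
  apply Rmult_le_compat_l. apply Rmult_le_pos. left; apply Rdiv_lt_0_compat; lra. lra. lra.
Qed.

Lemma Psi_lo K k v s : 0 < K -> 0 < k -> 0 <= s ->
  psi_ K k v * s <= Psi_ K k (v + s) - Psi_ K k v.
Proof.
  intros HK Hk Hs. unfold Psi_, psi_.
  pose proof (exp_lb (k * s)) as E.
  replace (exp (k * (v + s))) with (exp (k * v) * exp (k * s)).
  2:{ rewrite <- exp_plus. f_equal. ring. }
  set (e := exp (k * v)). assert (He : 0 < e) by apply exp_pos.
  set (f := exp (k * s)) in *.
  replace (K / k * (e * f - 1) - K / k * (e - 1)) with (K / k * e * (f - 1)) by ring.
  replace (K * e * s) with (K / k * e * (k * s)) by (field; lra).
  apply Rmult_le_compat_l. apply Rmult_le_pos. left; apply Rdiv_lt_0_compat; lra. lra. lra.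
Qed.

Lemma psi_shift K k v s : 0 < K -> psi_ K k v * (1 - k * s) <= psi_ K k (v - s).
Proof.
  intros HK. unfold psi_.
  replace (exp (k * (v - s))) with (exp (k * v) * exp (- (k * s))).
  2:{ rewrite <- exp_plus. f_equal. ring. }
  pose proof (exp_lb (- (k * s))). pose proof (exp_pos (k * v)).
  rewrite Rmult_assoc. apply Rmult_le_compat_l. lra. apply Rmult_le_compat_l; lra.
Qed.

Lemma Psi_up2 K k v s : 0 < K -> 0 < k -> 0 <= k * s <= / 2 ->
  Psi_ K k (v + s) - Psi_ K k v <= psi_ K k v * s * (1 + 2 * k * s).
Proof.
  intros HK Hk Hs. unfold Psi_, psi_.
  replace (exp (k * (v + s))) with (exp (k * v) * exp (k * s)).
  2:{ rewrite <- exp_plus. f_equal. ring. }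
  set (e := exp (k * v)). assert (He : 0 < e) by apply exp_pos.
  set (x := k * s) in *.
  assert (Hf : exp x <= 1 + x * (1 + 2 * x)).
  { pose proof (exp_lb (- x)) as E. rewrite exp_Ropp in E.
    pose proof (exp_pos x).
    assert (H1 : exp x * (1 - x) <= 1).
    { apply (Rmult_le_compat_l (exp x)) in E; [|lra].
      replace (exp x * / exp x) with 1 in E by (field; lra). replace (exp x * (1 + - x)) with (exp x * (1 - x)) in E by ring. lra. }
    assert (H2 : 0 <= x * x * (1 - 2 * x)) by (apply Rmult_le_pos; [apply Rmult_le_pos; lra|lra]).
    assert (H3 : 1 - x > 0) by lra.
    apply (Rmult_le_reg_r (1 - x)). lra.
    nra. }
  replace (K / k * (e * exp x - 1) - K / k * (e - 1)) with (K / k * e * (exp x - 1)) by ring.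
  replace (K * e * s * (1 + 2 * k * s)) with (K / k * e * (x * (1 + 2 * x))) by (unfold x; field; lra).
  apply Rmult_le_compat_l. apply Rmult_le_pos. left; apply Rdiv_lt_0_compat; lra. lra. lra.
Qed.

Lemma Psi_0 K k : Psi_ K k 0 = 0.
Proof. unfold Psi_. rewrite Rmult_0_r, exp_0. ring. Qed.

Lemma lim_up A B E t1 : 0 < t1 -> (forall t, 0 < t <= t1 -> A <= B + E * t) -> 0 <= E -> A <= B.
Proof.
  intros Ht1 H HE. destruct (Rle_or_lt A B) as [|Hlt]; [assumption|exfalso].
  destruct (Req_dec E 0) as [->|HE0].
  - specialize (H t1 ltac:(lra)). lra.
  - set (t := Rmin t1 ((A - B) / (2 * E))).
    assert (0 < (A - B) / (2 * E)) by (apply Rdiv_lt_0_compat; lra).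
    assert (Ht : 0 < t <= t1) by (unfold t; split; [apply Rmin_glb_lt; lra | apply Rmin_l]).
    specialize (H t Ht).
    assert (t <= (A - B) / (2 * E)) by apply Rmin_r.
    assert (E * t <= E * ((A - B) / (2 * E))) by (apply Rmult_le_compat_l; lra).
    replace (E * ((A - B) / (2 * E))) with ((A - B) / 2) in H2 by (field; lra). lra.
Qed.

Lemma lim_eps A B : (forall eps, 0 < eps -> A <= B + eps) -> A <= B.
Proof.
  intros H. destruct (Rle_or_lt A B) as [|Hlt]; [assumption|].
  specialize (H ((A - B) / 2) ltac:(lra)). lra.
Qed.

Lemma key_item (L U w D b y K k : R) (g : R -> R) :
  0 < K -> 0 < k -> assumptionA_item L U (D, g) ->
  0 <= y <= b -> b <= D ->
  (b < D -> U - L <= psi_ K k (w + b)) ->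
  (forall z, 0 <= z <= b -> g z - L * z - Psi_ K k (w + z) <= g y - L * y - Psi_ K k (w + y)) ->
  forall z, 0 <= z <= D -> (g z - L * z) - psi_ K k (w + y) * z <= (g y - L * y) - psi_ K k (w + y) * y.
Proof.
  intros HK Hk HA Hy HbD Hb Hmax z Hz.
  destruct HA as [HD [Hg0 [Hmono [Hcv Hder]]]].
  set (h := fun u => g u - L * u).
  assert (Hch : forall x1 x2 t, 0 <= x1 <= D -> 0 <= x2 <= D -> 0 <= t <= 1 ->
     t * h x1 + (1 - t) * h x2 <= h (t * x1 + (1 - t) * x2)).
  { intros x1 x2 t H1 H2 Ht. unfold h. pose proof (Hcv x1 x2 t H1 H2 Ht). nra. }
  change (h z - psi_ K k (w + y) * z <= h y - psi_ K k (w + y) * y).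
  set (P := psi_ K k (w + y)).
  assert (HP : 0 < P) by (apply psi_pos; lra).
  destruct (Rtotal_order z y) as [Hzy|[Hzy|Hzy]].
  -
    set (d := y - z).
    assert (Hd : 0 < d) by (unfold d; lra).
    assert (Hlim : P * d <= h y - h z).
    { apply Ropp_le_cancel.
      apply (lim_up _ _ (P * k * d * d) 1). lra. 2:{ apply Rmult_le_pos. apply Rmult_le_pos.
        apply Rmult_le_pos; lra. lra. lra. }
      intros t Ht.
      set (zt := t * z + (1 - t) * y).
      assert (Hzt : zt = y - t * d) by (unfold zt, d; ring).
      assert (Htd1 : t * d <= 1 * d) by (apply Rmult_le_compat_r; lra).
      assert (Htd0 : 0 <= t * d) by (apply Rmult_le_pos; lra).
      assert (Hztr : 0 <= zt <= b) by (rewrite Hzt; unfold d in *; split; lra).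
      pose proof (Hmax zt Hztr) as Hm.
      pose proof (Psi_lo K k (w + zt) (t * d) HK Hk Htd0) as Hlo.
      replace (w + zt + t * d) with (w + y) in Hlo by (rewrite Hzt; ring).
      pose proof (Hch z y t ltac:(lra) ltac:(lra) ltac:(lra)) as Hc. fold zt in Hc.
      pose proof (psi_shift K k (w + y) (t * d) HK) as Hs.
      replace (w + y - t * d) with (w + zt) in Hs by (rewrite Hzt; ring).
      fold P in Hs.
      assert (Hm' : h zt - Psi_ K k (w + zt) <= h y - Psi_ K k (w + y)) by (unfold h; lra).
      (* t (h y - h z) >= psi(w+zt) t d >= P (1 - k t d) t d *)
      assert (H1 : t * (h y - h z) >= t * (P * d - P * k * d * d * t)).
      { assert (psi_ K k (w + zt) * (t * d) >= P * (1 - k * (t * d)) * (t * d)).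
        { apply Rle_ge. apply Rmult_le_compat_r. nra. lra. }
        replace (t * (P * d - P * k * d * d * t)) with (P * (1 - k * (t * d)) * (t * d)) by ring.
        lra. }
      apply Rge_le in H1. apply Rmult_le_reg_l in H1; [|lra]. lra. }
    replace (P * d) with (P * y - P * z) in Hlim by (unfold d; ring). lra.
  - subst z. lra.
  -
    set (d := z - y).
    assert (Hd : 0 < d) by (unfold d; lra).
    destruct (Rlt_or_le y b) as [Hyb|Hyb].
    + assert (Hlim : h z - h y <= P * d).
      { set (t1 := Rmin 1 (Rmin ((b - y) / d) (/ (2 * k * d)))).
        assert (Ht1 : 0 < t1).
        { unfold t1. apply Rmin_glb_lt. lra. apply Rmin_glb_lt.
          apply Rdiv_lt_0_compat; lra. apply Rinv_0_lt_compat. nra. }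
        assert (Ht1a : t1 <= 1) by apply Rmin_l.
        assert (Ht1b : t1 <= (b - y) / d) by (eapply Rle_trans; [apply Rmin_r|apply Rmin_l]).
        assert (Ht1c : t1 <= / (2 * k * d)) by (eapply Rle_trans; [apply Rmin_r|apply Rmin_r]).
        apply (lim_up _ _ (2 * P * k * d * d) t1 Ht1).
        2:{ assert (0 <= P * k * d * d). apply Rmult_le_pos. apply Rmult_le_pos.
            apply Rmult_le_pos; lra. lra. lra. lra. }
        intros t Ht.
        set (zt := t * z + (1 - t) * y).
        assert (Hzt : zt = y + t * d) by (unfold zt, d; ring).
        assert (Htd : t * d <= b - y).
        { assert (t <= (b - y) / d) by lra.
          apply (Rmult_le_compat_r d) in H; [|lra].
          replace ((b - y) / d * d) with (b - y) in H by (field; lra). lra. }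
        assert (Hktd : k * (t * d) <= / 2).
        { assert (t <= / (2 * k * d)) by lra.
          apply (Rmult_le_compat_r (k * d)) in H; [|nra].
          replace (/ (2 * k * d) * (k * d)) with (/ 2) in H by (field; nra). nra. }
        assert (Htd0 : 0 <= t * d) by (apply Rmult_le_pos; lra).
        assert (Hztr : 0 <= zt <= b) by (rewrite Hzt; split; lra).
        pose proof (Hmax zt Hztr) as Hm.
        pose proof (Psi_up2 K k (w + y) (t * d) HK Hk ltac:(split; [apply Rmult_le_pos; lra|lra])) as Hup.
        replace (w + y + t * d) with (w + zt) in Hup by (rewrite Hzt; ring).
        fold P in Hup.
        pose proof (Hch z y t ltac:(lra) ltac:(lra) ltac:(lra)) as Hc. fold zt in Hc.
        assert (Hm' : h zt - Psi_ K k (w + zt) <= h y - Psi_ K k (w + y)) by (unfold h; lra).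
        assert (H1 : t * (h z - h y) <= t * (P * d + 2 * P * k * d * d * t)).
        { replace (t * (P * d + 2 * P * k * d * d * t)) with (P * (t * d) * (1 + 2 * k * (t * d))) by ring.
          lra. }
        apply Rmult_le_reg_l in H1; [|lra]. lra. }
      replace (P * d) with (P * z - P * y) in Hlim by (unfold d; ring). lra.
    + assert (Hyb' : y = b) by lra. subst y.
      assert (HbD' : b < D) by lra.
      specialize (Hb HbD').
      assert (Hlim : h z - h b <= (U - L) * d).
      { apply lim_eps. intros eps Heps.
        destruct (Hder b ltac:(lra)) as [l [Hl Hlb]].
        destruct (Hl (eps / d) ltac:(apply Rdiv_lt_0_compat; lra)) as [del [Hdel Hdl]].
        set (t := Rmin 1 (del / (2 * d))).
        assert (Ht : 0 < t) by (unfold t; apply Rmin_glb_lt; [lra| apply Rdiv_lt_0_compat; lra]).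
        assert (Ht1 : t <= 1) by apply Rmin_l.
        assert (Ht2 : t * d < del).
        { assert (t <= del / (2 * d)) by apply Rmin_r.
          apply (Rmult_le_compat_r d) in H; [|lra].
          replace (del / (2 * d) * d) with (del / 2) in H by (field; lra). lra. }
        set (yt := t * z + (1 - t) * b).
        assert (Hyt : yt = b + t * d) by (unfold yt, d; ring).
        assert (Htd0 : 0 < t * d) by (apply Rmult_lt_0_compat; lra).
        assert (Htd1 : t * d <= 1 * d) by (apply Rmult_le_compat_r; lra).
        assert (Hytr : 0 <= yt <= D) by (rewrite Hyt; unfold d in *; split; lra).
        assert (Hne : yt <> b) by (rewrite Hyt; lra).
        assert (Habs : Rabs (yt - b) < del) by (rewrite Hyt; replace (b + t * d - b) with (t * d) by ring;
          rewrite Rabs_right; lra).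
        specialize (Hdl yt Hytr Hne Habs).
        apply Rabs_def2 in Hdl. destruct Hdl as [Hdl _].
        replace (yt - b) with (t * d) in Hdl by (rewrite Hyt; ring).
        assert (Hgd : g yt - g b <= (l + eps / d) * (t * d)).
        { assert (Hq : (g yt - g b) / (t * d) < l + eps / d) by lra.
          apply (Rmult_lt_compat_r (t * d)) in Hq; [|nra].
          replace ((g yt - g b) / (t * d) * (t * d)) with (g yt - g b) in Hq by (field; nra). lra. }
        pose proof (Hcv z b t ltac:(lra) ltac:(lra) ltac:(lra)) as Hc. fold yt in Hc.
        assert (H1 : t * (g z - g b) <= t * ((U + eps / d) * d)).
        { replace (t * ((U + eps / d) * d)) with ((U + eps / d) * (t * d)) by ring.
          assert ((l + eps / d) * (t * d) <= (U + eps / d) * (t * d)) by (apply Rmult_le_compat_r; nra).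
          nra. }
        apply Rmult_le_reg_l in H1; [|lra].
        unfold h. replace ((U + eps / d) * d) with (U * d + eps) in H1 by (field; lra).
        unfold d in *. nra. }
      assert ((U - L) * d <= P * d) by (apply Rmult_le_compat_r; [lra| unfold P; lra]).
      replace (P * d) with (P * z - P * b) in H by (unfold d; ring). lra.
Qed.

Definition clamp (b x : R) := Rmax 0 (Rmin b x).

Lemma clamp_range b x : 0 <= b -> 0 <= clamp b x <= b.
Proof. intros. unfold clamp, Rmax, Rmin. repeat destruct Rle_dec; lra. Qed.

Lemma clamp_id b x : 0 <= x <= b -> clamp b x = x.
Proof. intros. unfold clamp, Rmax, Rmin. repeat destruct Rle_dec; lra. Qed.

Lemma clamp_lip b x y : 0 <= b -> Rabs (clamp b x - clamp b y) <= Rabs (x - y).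
Proof.
  intros. unfold clamp, Rmax, Rmin. repeat destruct Rle_dec;
  unfold Rabs; repeat destruct Rcase_abs; lra.
Qed.

Lemma cont_clamp b c : 0 <= b -> continuity_pt (clamp b) c.
Proof.
  intros Hb. unfold continuity_pt, continue_in, limit1_in, limit_in. simpl. unfold R_dist.
  intros eps Heps. exists eps. split. lra. intros x [_ Hx].
  pose proof (clamp_lip b x c Hb). lra.
Qed.

Lemma cont_g_clamp (L U D b : R) (g : R -> R) c :
  assumptionA_item L U (D, g) -> 0 <= b <= D -> 0 <= c <= b ->
  continuity_pt (fun x => g (clamp b x)) c.
Proof.
  intros HA Hb Hc. destruct HA as [HD [_ [_ [_ Hder]]]].
  unfold continuity_pt, continue_in, limit1_in, limit_in. simpl. unfold R_dist.
  intros eps Heps.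
  destruct (Hder c ltac:(lra)) as [l [Hl _]].
  destruct (Hl 1 ltac:(lra)) as [del [Hdel Hd]].
  set (M := Rabs l + 1).
  assert (HM : 0 < M) by (unfold M; pose proof (Rabs_pos l); lra).
  exists (Rmin del (eps / M)). split.
  { apply Rmin_glb_lt. lra. apply Rdiv_lt_0_compat; lra. }
  intros x [_ Hx].
  rewrite (clamp_id b c) by lra.
  pose proof (clamp_lip b x c ltac:(lra)) as Hlip. rewrite (clamp_id b c) in Hlip by lra.
  pose proof (clamp_range b x ltac:(lra)) as Hr.
  set (y := clamp b x) in *.
  assert (Hx1 : Rabs (x - c) < del) by (eapply Rlt_le_trans; [exact Hx| apply Rmin_l]).
  assert (Hx2 : Rabs (x - c) < eps / M) by (eapply Rlt_le_trans; [exact Hx| apply Rmin_r]).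
  destruct (Req_dec y c) as [Hyc|Hyc].
  { rewrite Hyc. replace (g c - g c) with 0 by ring. rewrite Rabs_R0. lra. }
  specialize (Hd y ltac:(lra) Hyc ltac:(lra)).
  assert (Hq : Rabs ((g y - g c) / (y - c)) <= M).
  { unfold M. replace ((g y - g c) / (y - c)) with (((g y - g c) / (y - c) - l) + l) by ring.
    eapply Rle_trans. apply Rabs_triang. lra. }
  replace (g y - g c) with ((g y - g c) / (y - c) * (y - c)) by (field; lra).
  rewrite Rabs_mult.
  assert (Rabs ((g y - g c) / (y - c)) * Rabs (y - c) <= M * Rabs (x - c)).
  { apply Rmult_le_compat; try apply Rabs_pos; lra. }
  assert (M * Rabs (x - c) < M * (eps / M)) by (apply Rmult_lt_compat_l; lra).
  replace (M * (eps / M)) with eps in H0 by (field; lra). lra.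
Qed.

Lemma exists_max (L U D b w K k : R) (g : R -> R) :
  assumptionA_item L U (D, g) -> 0 <= b <= D ->
  exists y, 0 <= y <= b /\ forall z, 0 <= z <= b ->
    g z - L * z - Psi_ K k (w + z) <= g y - L * y - Psi_ K k (w + y).
Proof.
  intros HA Hb.
  set (G := fun x => g (clamp b x) - (fun u => L * u + K / k * (exp (k * (w + u)) - 1)) (clamp b x)).
  assert (HG : forall c, 0 <= c <= b -> continuity_pt G c).
  { intros c Hc. unfold G. apply continuity_pt_minus.
    - apply (cont_g_clamp L U D b g c HA Hb Hc).
    - change (continuity_pt (comp (fun u => L * u + K / k * (exp (k * (w + u)) - 1)) (clamp b)) c).
      apply continuity_pt_comp. apply cont_clamp; lra. reg. }
  destruct (continuity_ab_maj G 0 b ltac:(lra) HG) as [y [Hy Hyr]].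
  exists y. split. exact Hyr. intros z Hz. specialize (Hy z Hz).
  unfold G in Hy. rewrite !clamp_id in Hy by lra. unfold Psi_. lra.
Qed.

Definition Fobj (L K k w : R) (g : R -> R) (u : R) := g u - L * u - Psi_ K k (w + u).

Definition choose_y (C L K k w : R) (it : item) : R :=
  epsilon (inhabits 0) (fun y => 0 <= y <= Rmin (fst it) (C - w) /\
     forall z, 0 <= z <= Rmin (fst it) (C - w) -> Fobj L K k w (snd it) z <= Fobj L K k w (snd it) y).

Fixpoint dec_from (C L K k w : R) (I : instance) : list R :=
  match I with
  | [] => []
  | it :: I' => let y := choose_y C L K k w it in y :: dec_from C L K k (w + y) I'
  end.

Definition alg (C L K k : R) : online_alg :=
  fun h => nth (pred (length h)) (dec_from C L K k 0 h) 0.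

Lemma dec_from_length C L K k : forall I w, length (dec_from C L K k w I) = length I.
Proof. induction I; intros; simpl; auto. Qed.

Lemma dec_from_firstn C L K k : forall I w n,
  dec_from C L K k w (firstn n I) = firstn n (dec_from C L K k w I).
Proof.
  induction I; intros w n; destruct n; simpl; auto. now rewrite IHI.
Qed.

Lemma map_nth_seq_gen {A} (d : A) : forall (l : list A) s,
  map (fun n => nth (n - s) l d) (seq s (length l)) = l.
Proof.
  induction l; intros s; simpl. reflexivity.
  rewrite Nat.sub_diag. f_equal.
  rewrite <- (IHl (S s)) at 2. apply map_ext_in. intros n Hn. apply in_seq in Hn.
  replace (n - s)%nat with (S (n - S s)) by lia. reflexivity.
Qed.

Lemma decisions_alg C L K k I : decisions (alg C L K k) I = dec_from C L K k 0 I.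
Proof.
  unfold decisions, alg.
  transitivity (map (fun n => nth (n - 0) (dec_from C L K k 0 I) 0) (seq 0 (length (dec_from C L K k 0 I)))).
  2: apply map_nth_seq_gen.
  rewrite dec_from_length. apply map_ext_in. intros n Hn. apply in_seq in Hn.
  rewrite length_firstn. replace (pred (Nat.min (S n) (length I))) with n by lia.
  rewrite dec_from_firstn. rewrite Nat.sub_0_r.
  rewrite nth_firstn. destruct (Nat.ltb_spec n (S n)); [reflexivity|lia].
Qed.

Definition hs (L : R) (I : instance) (ys : list R) : R :=
  Rsum (map (fun p : item * R => snd (fst p) (snd p) - L * snd p) (combine I ys)).

Lemma payoff_hs C L (P : item -> R -> Prop) : forall I ys, Forall2 P I ys ->
  payoff C L I ys = C * L + hs L I ys.
Proof.
  intros I ys H. induction H.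
  - unfold payoff, hs. simpl. ring.
  - unfold payoff, hs in *. simpl. lra.
Qed.

Lemma Rsum_nonneg (P : item -> R -> Prop) : forall I ys,
  Forall2 (fun (it : item) yn => 0 <= yn <= fst it) I ys -> 0 <= Rsum ys.
Proof. intros I ys H. induction H; simpl; lra. Qed.

Lemma main_ind C L U K k : 0 < C -> 0 < K -> 0 < k -> U - L <= psi_ K k C ->
  forall I, assumptionA L U I -> forall w, 0 <= w <= C ->
  let ds := dec_from C L K k w I in
  Forall2 (fun (it : item) yn => 0 <= yn <= fst it) I ds /\ 0 <= Rsum ds /\ w + Rsum ds <= C /\
  0 <= hs L I ds - (Psi_ K k (w + Rsum ds) - Psi_ K k w) /\
  forall ys lam, Forall2 (fun (it : item) yn => 0 <= yn <= fst it) I ys ->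
     psi_ K k (w + Rsum ds) <= lam ->
     hs L I ys - lam * Rsum ys <= hs L I ds - (Psi_ K k (w + Rsum ds) - Psi_ K k w).
Proof.
  intros hC HK Hk HpsiC I HA. induction HA as [|[D g] I' Hit HA' IH]; intros w Hw ds.
  - unfold ds. simpl. repeat split; try lra.
    + constructor.
    + unfold hs. simpl. rewrite Rplus_0_r. lra.
    + intros ys lam Hys _. inversion Hys. unfold hs. simpl. rewrite Rplus_0_r. lra.
  - set (b := Rmin D (C - w)).
    pose proof Hit as Hit'. destruct Hit' as [HD [Hg0 _]].
    assert (Hb : 0 <= b <= D) by (unfold b, Rmin; destruct Rle_dec; lra).
    assert (Hex := exists_max L U D b w K k g Hit Hb).
    set (y0 := choose_y C L K k w (D, g)).
    assert (Hy0 : 0 <= y0 <= b /\ forall z, 0 <= z <= b -> Fobj L K k w g z <= Fobj L K k w g y0).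
    { unfold y0, choose_y. simpl. apply (epsilon_spec (inhabits 0) (fun y => 0 <= y <= Rmin D (C - w) /\
     (forall z, 0 <= z <= Rmin D (C - w) -> Fobj L K k w g z <= Fobj L K k w g y))).
      exact Hex. }
    destruct Hy0 as [Hy0r Hmax]. unfold Fobj in Hmax.
    assert (Hbw : b < D -> U - L <= psi_ K k (w + b)).
    { intro Hlt. unfold b, Rmin in *. destruct Rle_dec; [lra|].
      replace (w + (C - w)) with C by ring. exact HpsiC. }
    pose proof (key_item L U w D b y0 K k g HK Hk Hit Hy0r (proj2 Hb) Hbw Hmax) as Hkey.
    assert (Hby : b <= C - w) by (unfold b; apply Rmin_r).
    specialize (IH (w + y0) ltac:(lra)).
    unfold ds. simpl. fold y0.
    set (ds' := dec_from C L K k (w + y0) I') in *.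
    destruct IH as [IF [IR0 [IC [IX IY]]]].
    replace (w + (y0 + Rsum ds')) with (w + y0 + Rsum ds') by ring.
    assert (Hhs : forall z zs, hs L ((D, g) :: I') (z :: zs) = g z - L * z + hs L I' zs).
    { intros. unfold hs. reflexivity. }
    pose proof (Psi_up K k w y0 HK Hk ltac:(lra)) as Hup.
    pose proof (Hkey 0 ltac:(lra)) as Hk0. rewrite Hg0 in Hk0.
    repeat split.
    + constructor; simpl. lra. exact IF.
    + lra.
    + lra.
    + rewrite Hhs. lra.
    + intros ys lam Hys Hlam. inversion Hys as [|it z I0 zs Hz Hzs]; subst.
      rewrite Hhs. simpl. simpl in Hz.
      specialize (IY zs lam Hzs Hlam).
      assert (Hpm : psi_ K k (w + y0) <= lam).
      { eapply Rle_trans; [|exact Hlam]. apply psi_mono; lra. }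
      assert (psi_ K k (w + y0) * z <= lam * z) by (apply Rmult_le_compat_r; lra).
      pose proof (Hkey z Hz).
      rewrite Hhs, Rmult_plus_distr_l. lra.
Qed.

Lemma upper_bound (C L U alpha : R) :
  0 < C -> 0 < L -> L < U -> 1 < alpha ->
  exp alpha = (U - L) / ((alpha - 1) * L) ->
  exists A, valid_alg C L U A /\ competitive C L U A alpha.
Proof.
  intros hC hL hLU ha Hexp.
  set (K := (alpha - 1) * L). set (k := alpha / C).
  assert (HK : 0 < K) by (unfold K; nra).
  assert (Hk : 0 < k) by (unfold k; apply Rdiv_lt_0_compat; lra).
  assert (HpsiC : U - L <= psi_ K k C).
  { unfold psi_, k. replace (alpha / C * C) with alpha by (field; lra). rewrite Hexp.
    unfold K. right. field. nra. }
  exists (alg C L K k).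
  assert (HM := main_ind C L U K k hC HK Hk HpsiC).
  split.
  - intros I HA. rewrite decisions_alg.
    destruct (HM I HA 0 ltac:(lra)) as [HF [HR0 [HC _]]].
    split; [|split]. rewrite dec_from_length; reflexivity. exact HF. lra.
  - intros I HA ys Hys. rewrite decisions_alg.
    destruct (HM I HA 0 ltac:(lra)) as [HF [HR0 [HC [HX HY]]]].
    set (ds := dec_from C L K k 0 I) in *.
    destruct Hys as [_ [Hys HyC]].
    rewrite (payoff_hs C L _ I ys Hys), (payoff_hs C L _ I ds HF).
    set (W := 0 + Rsum ds) in *.
    set (lam := psi_ K k W).
    specialize (HY ys lam Hys (Rle_refl _)).
    rewrite Psi_0 in HX, HY.
    set (X := hs L I ds - Psi_ K k W) in *.
    assert (Hlam : 0 <= lam) by (left; apply psi_pos; lra).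
    assert (lam * Rsum ys <= lam * C) by (apply Rmult_le_compat_l; lra).
    assert (HPsi : alpha * Psi_ K k W = C * lam - C * K).
    { unfold lam, Psi_, psi_, k. field. lra. }
    assert (hs L I ds = X + Psi_ K k W) by (unfold X; ring).
    rewrite H0.
    assert (HaX : alpha * X >= X) by nra.
    assert (HCK : C * K = alpha * (C * L) - C * L) by (unfold K; ring).
    replace (alpha * (C * L + (X + Psi_ K k W))) with (alpha * (C * L) + alpha * X + alpha * Psi_ K k W) by ring.
    rewrite HPsi, HCK. unfold X in *. lra.
Qed.


Theorem corollary2 (C L U : R) (hC : 0 < C) (hL : 0 < L) (hLU : L < U) :
  (exists alpha, 1 < alpha /\ alpha = ln ((U - L) / (alpha * L - L))) /\
  (forall alpha, 1 < alpha -> alpha = ln ((U - L) / (alpha * L - L)) ->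
     optimal_ratio C L U alpha).
Proof.
  split.
  - exact (exists_alpha L U hL hLU).
  - intros alpha ha Heq.
    assert (Hexp : exp alpha = (U - L) / ((alpha - 1) * L)).
    { replace ((alpha - 1) * L) with (alpha * L - L) by ring.
      rewrite Heq at 1. apply exp_ln. apply Rdiv_lt_0_compat; nra. }
    split.
    + exact (upper_bound C L U alpha hC hL hLU ha Hexp).
    + intros A r' Hv Hc. exact (lower_bound C L U alpha A r' hC hL hLU ha Hexp Hv Hc).
Qed.
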